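(* Let $A, B, C, F \in \mathbb{R}^{n\times n}$ with $A$ and $C$ non-singular, and let $I$ be the $n\times n$ identity matrix. Suppose that $$\rho\left((I\otimes CA^{-1}B)D\right) < 1$$ for every diagonal matrix $D = \mathrm{diag}(d_i) \in \mathbb{R}^{n^2\times n^2}$ with all $d_i \in [-1,1]$. Then the matrix equation $$AX + B\lvert CX\rvert = F$$ has exactly one solution $X \in \mathbb{R}^{n\times n}$.
   Context: $\otimes$ denotes the Kronecker product, $\rho(\cdot)$ the spectral radius, and $\lvert M\rvert$ the entrywise absolute value. *)

(* Defs.v *)
(* Real matrices over an arbitrary real closed field R
   (the reals are one instance); complex numbers are R[i] from
   mathcomp-real-closed, Kronecker product is tensmx from mxtens. *)
From HB Require Import structures.
From mathcomp Require Import all_boot all_order all_algebra.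
From mathcomp Require Import complex mxtens.
Set Implicit Arguments. Unset Strict Implicit. Unset Printing Implicit Defensive.
Import Order.TTheory GRing.Theory Num.Theory.
Local Open Scope ring_scope.

Definition complexify (R : rcfType) (n : nat) (M : 'M[R]_n) : 'M[R[i]]_n :=
  map_mx (fun x => x%:C%C) M.

(* The spectrum (eigenvalues with algebraic multiplicity) of a real square
   matrix: the roots in C = R[i] of its characteristic polynomial, obtained
   from the splitting of char_poly over the algebraically closed field R[i]. *)
Definition spectrum (R : rcfType) (n : nat) (M : 'M[R]_n) : seq R[i] :=
  proj1_sig (closed_field_poly_normal (char_poly (complexify M))).

(* Spectral radius: the maximal modulus of an eigenvalue (0 for n = 0). *)
Definition spectral_radius (R : rcfType) (n : nat) (M : 'M[R]_n) : R :=
  \big[Num.max/0]_(z <- spectrum M) Normc.normc z.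

Notation kron A B := (tensmx A B).

Definition mxabs (R : numDomainType) (m n : nat) (M : 'M[R]_(m, n)) :
  'M[R]_(m, n) := map_mx (fun x => `|x|) M.

(* Main.v *)
Require Import Defs.
From HB Require Import structures.
From mathcomp Require Import all_boot all_order all_algebra.
From mathcomp Require Import complex mxtens.
From mathcomp Require Import ring lra.
Import Order.TTheory GRing.Theory Num.Theory.
Local Open Scope ring_scope.
Set Implicit Arguments. Unset Strict Implicit. Unset Printing Implicit Defensive.

Definition dmul (R : numDomainType) n (d z : 'cV[R]_n) : 'cV[R]_n :=
  \col_i (d i 0 * z i 0).
Definition inbox (R : numDomainType) n (d : 'cV[R]_n) :=
  forall i, -1 <= d i 0 <= 1.
Definition reg (R : numDomainType) n (M : 'M[R]_n) :=
  forall d, inbox d -> forall z, z + M *m dmul d z = 0 -> z = 0.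
Definition surj (R : numDomainType) n (M : 'M[R]_n) :=
  forall g : 'cV_n, exists x, x + M *m mxabs x = g.

Definition ratio (R : realFieldType) (a b : R) :=
  if a == b then 0 else (`|a| - `|b|) / (a - b).

Lemma ratio_box (R : realFieldType) (a b : R) : -1 <= ratio a b <= 1.
Proof.
rewrite /ratio; case: eqP => [_|/eqP hab]; first by rewrite lerN10 ler01.
rewrite -ler_norml normrM normrV ?unitfE ?subr_eq0 //.
rewrite ler_pdivrMr ?normr_gt0 ?subr_eq0 // mul1r; exact: ler_dist_dist.
Qed.

Lemma ratioE (R : realFieldType) (a b : R) : `|a| - `|b| = ratio a b * (a - b).
Proof.
rewrite /ratio; case: eqP => [->|/eqP hab]; first by rewrite subrr mul0r.
by rewrite divfK // subr_eq0.
Qed.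

Lemma absdiff_vec (R : realFieldType) n (x y : 'cV[R]_n) :
  exists2 d, inbox d & mxabs x - mxabs y = dmul d (x - y).
Proof.
exists (\col_i ratio (x i 0) (y i 0)).
  by move=> i; rewrite mxE ratio_box.
by apply/colP => i; rewrite !mxE ratioE.
Qed.

Lemma ave_uniq (R : realFieldType) n (M : 'M[R]_n) (x y : 'cV[R]_n) : reg M ->
  x + M *m mxabs x = y + M *m mxabs y -> x = y.
Proof.
move=> rM H; have [d hd E] := absdiff_vec x y.
apply/eqP; rewrite -subr_eq0; apply/eqP; apply: (rM d hd).
by rewrite -E mulmxBr addrACA -opprD H subrr.
Qed.

Lemma dmul_col (R : numDomainType) m1 m2 (d1 z1 : 'cV[R]_m1) (d2 z2 : 'cV[R]_m2) :
  dmul (col_mx d1 d2) (col_mx z1 z2) = col_mx (dmul d1 z1) (dmul d2 z2).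
Proof.
by apply/colP => i; rewrite !mxE; case: splitP => j _; rewrite !mxE.
Qed.

Lemma inbox_col (R : numDomainType) m1 m2 (d1 : 'cV[R]_m1) (d2 : 'cV[R]_m2) :
  inbox d1 -> inbox d2 -> inbox (col_mx d1 d2).
Proof. by move=> h1 h2 i; rewrite mxE; case: splitP => j _. Qed.

Lemma mxabs_col (R : numDomainType) m1 m2 (z1 : 'cV[R]_m1) (z2 : 'cV[R]_m2) :
  mxabs (col_mx z1 z2) = col_mx (mxabs z1) (mxabs z2).
Proof. exact: map_col_mx. Qed.

Lemma scal11 (R : pzRingType) (x : R) : (x%:M : 'M_1) 0 0 = x.
Proof. by rewrite mxE eqxx mulr1n. Qed.

Lemma dmul11 (R : numDomainType) (s t : R) : dmul s%:M t%:M = (s * t)%:M.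
Proof. by apply/matrixP => i j; rewrite !ord1 !mxE !eqxx !mulr1n. Qed.

Lemma eq11 (R : pzRingType) (A B : 'M[R]_1) : A 0 0 = B 0 0 -> A = B.
Proof. by move=> h; rewrite (mx11_scalar A) (mx11_scalar B) h. Qed.

Lemma dmul0 (R : numDomainType) n (z : 'cV[R]_n) : dmul 0 z = 0.
Proof. by apply/colP => i; rewrite !mxE mul0r. Qed.

Lemma step (R : realFieldType) n (IH : forall M : 'M[R]_n, reg M -> surj M)
  (a : 'M[R]_1) (b : 'rV[R]_n) (c : 'cV[R]_n) (e : 'M[R]_n) :
  reg (block_mx a b c e) -> surj (block_mx a b c e).
Proof.
move=> rM.
set al := a 0 0. have ha : a = al%:M := mx11_scalar a.
have F1 : forall s, -1 <= s <= 1 -> 1 + al * s != 0.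
  move=> s hs; apply/negP => /eqP H0.
  have Hz : col_mx (1%:M : 'M_1) (- (s *: c)) = 0.
    apply: (rM (col_mx s%:M 0)).
      apply: inbox_col => i; rewrite ?ord1 ?scal11 ?mxE //; by rewrite lerN10 ler01.
    rewrite dmul_col dmul11 dmul0 mul_block_col add_col_mx mulmx0 !addr0.
    apply/eqP; rewrite col_mx_eq0; apply/andP; split; apply/eqP.
      apply: eq11; rewrite ha mul_mx_scalar !mxE !eqxx !mulr1n.
      idtac.
      by rewrite mulr1 mulrC H0.
    by rewrite mulmx0 addr0 mul_mx_scalar mulr1 addNr.
  move/eqP: Hz; rewrite col_mx_eq0 => /andP [/eqP h _].
  by have := congr1 (fun m : 'M[R]_1 => m 0 0) h; rewrite scal11 mxE => /eqP; rewrite oner_eq0.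
have F2 : forall s, -1 <= s <= 1 -> reg (e - (s / (1 + al * s)) *: (c *m b)).
  move=> s hs d' hd' z' hz.
  have hbe := F1 s hs.
  have Hz : col_mx ((- (b *m dmul d' z') 0 0 / (1 + al * s))%:M : 'M_1) z' = 0.
    apply: (rM (col_mx s%:M d')).
      by apply: inbox_col => // i; rewrite ord1 scal11.
    rewrite dmul_col dmul11 mul_block_col add_col_mx.
    apply/eqP; rewrite col_mx_eq0; apply/andP; split; apply/eqP.
      apply: eq11; rewrite ha mul_mx_scalar [b *m dmul d' z']mx11_scalar !mxE !eqxx !mulr1n.
      by field.
    rewrite mulmxBl -scalemxAl -mulmxA [b *m dmul d' z']mx11_scalar mul_mx_scalar in hz.
    rewrite mul_mx_scalar.
    move: hz; move: (e *m dmul d' z') => E hz.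
    apply/colP => i; move/colP: hz => /(_ i); rewrite !mxE => hzi.
    by rewrite -[RHS]hzi; field.
  by move/eqP: Hz; rewrite col_mx_eq0 => /andP [_ /eqP ->].
have F3 : forall s, -1 <= s <= 1 -> forall g, exists t, exists y,
    col_mx (t%:M : 'M_1) y + block_mx a b c e *m col_mx ((s * t)%:M) (mxabs y) = g.
  move=> s hs g; have hbe := F1 s hs.
  rewrite -[g]vsubmxK; move: (usubmx g) (dsubmx g) => g1 g2.
  have [y hy] := IH _ (F2 s hs) (g2 - (s * g1 0 0 / (1 + al * s)) *: c).
  exists ((g1 0 0 - (b *m mxabs y) 0 0) / (1 + al * s)), y.
  rewrite mul_block_col add_col_mx; congr col_mx.
    apply: eq11; rewrite ha mul_mx_scalar [b *m mxabs y]mx11_scalar !mxE !eqxx !mulr1n.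
    by field.
  rewrite mulmxBl -scalemxAl -mulmxA [b *m mxabs y]mx11_scalar mul_mx_scalar in hy.
  rewrite mul_mx_scalar.
  move: hy; move: (e *m mxabs y) => E hy.
  apply/colP => i; move/colP: hy => /(_ i); rewrite !mxE => hyi.
  rewrite -[RHS](subrK ((s * g1 0 0 / (1 + al * s)) * c i 0)) -hyi.
  by field.
move=> g.
have [t1 [y1 h1]] := F3 1 (ltac:(by apply/andP; split; lra)) g.
have [t2 [y2 h2]] := F3 (-1) (ltac:(by apply/andP; split; lra)) g.
case: (lerP 0 t1) => ht1.
  exists (col_mx t1%:M y1); rewrite mxabs_col.
  have -> : mxabs (t1%:M : 'M_1) = (1 * t1)%:M.
    by apply: eq11; rewrite !mxE !eqxx !mulr1n mul1r ger0_norm.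
  exact: h1.
case: (lerP t2 0) => ht2.
  exists (col_mx t2%:M y2); rewrite mxabs_col.
  have -> : mxabs (t2%:M : 'M_1) = (-1 * t2)%:M.
    by apply: eq11; rewrite !mxE !eqxx !mulr1n mulN1r ler0_norm.
  exact: h2.
exfalso.
have [d2 hd2 E2] := absdiff_vec y1 y2.
have ht : t1 - t2 != 0 by rewrite subr_eq0; apply/eqP => ht; move: ht1 ht2; rewrite ht; clear; lra.
have ht' : t1 - t2 < 0 by clear -ht1 ht2; lra.
have Hz : col_mx ((t1 - t2)%:M : 'M_1) (y1 - y2) = 0.
  apply: (rM (col_mx ((t1 + t2) / (t1 - t2))%:M d2)).
    apply: inbox_col => // i; rewrite ord1 scal11.
    rewrite ler_ndivrMr // ler_ndivlMr //; apply/andP; split; clear -ht1 ht2; lra.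
  rewrite dmul_col dmul11 -E2 divfK //.
  have E1 : col_mx ((t1 - t2)%:M : 'M_1) (y1 - y2) = col_mx t1%:M y1 - col_mx t2%:M y2.
    by rewrite opp_col_mx add_col_mx; congr col_mx; apply: eq11; rewrite !mxE !eqxx !mulr1n.
  have E3 : col_mx ((t1 + t2)%:M : 'M_1) (mxabs y1 - mxabs y2) =
      col_mx ((1 * t1)%:M) (mxabs y1) - col_mx ((-1 * t2)%:M) (mxabs y2).
    by rewrite opp_col_mx add_col_mx; congr col_mx; apply: eq11; rewrite !mxE !eqxx !mulr1n mul1r mulN1r opprK.
  by rewrite E1 E3 mulmxBr addrACA -opprD h1 h2 subrr.
move/eqP: Hz; rewrite col_mx_eq0 => /andP [/eqP h _].
have := congr1 (fun m : 'M[R]_1 => m 0 0) h; rewrite scal11 mxE => h'.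
clear -h' ht1 ht2; lra.
Qed.

Lemma ave_surj (R : realFieldType) n : forall M : 'M[R]_n, reg M -> surj M.
Proof.
elim: n => [|n IH] M rM.
  by move=> g; exists 0; apply/matrixP => -[].
have := @step R n IH (ulsubmx (M : 'M_(1 + n))) (ursubmx (M : 'M_(1 + n)))
  (dlsubmx (M : 'M_(1 + n))) (drsubmx (M : 'M_(1 + n))).
rewrite submxK; exact.
Qed.

Lemma char_poly_tr (R : comNzRingType) n (K : 'M[R]_n) : char_poly K^T = char_poly K.
Proof.
rewrite /char_poly -[RHS]det_tr; congr (\det _).
by apply/matrixP => i j; rewrite !mxE eq_sym.
Qed.

Lemma le_bigmax_in (R : realDomainType) (T : eqType) (s : seq T) (F : T -> R) x :
  x \in s -> F x <= \big[Num.max/0]_(z <- s) F z.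
Proof.
elim: s => // y s IHs; rewrite in_cons big_cons le_max.
by case/orP => [/eqP->|/IHs->]; rewrite ?lexx ?orbT.
Qed.

Lemma normcN1 (R : rcfType) : Normc.normc (-1 : R[i]) = 1.
Proof. by rewrite /Normc.normc /= oppr0 expr0n /= addr0 sqrrN expr1n sqrtr1. Qed.

Lemma spec_ge1 (R : rcfType) N (K : 'M[R]_N) (w : 'cV[R]_N) :
  w != 0 -> K *m w = - w -> 1 <= spectral_radius K.
Proof.
move=> wn0 Kw.
have ev : eigenvalue K^T (-1).
  apply/eigenvalueP; exists w^T; last by rewrite trmx_eq0.
  by rewrite -trmx_mul Kw scaleN1r linearN.
rewrite eigenvalue_root_char char_poly_tr in ev.
have rc : root (char_poly (complexify K)) (-1).
  have := rmorph_root (real_complex R) ev.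
  by rewrite map_char_poly rmorphN1.
rewrite /spectral_radius /spectrum; case: closed_field_poly_normal => s /= hs.
move: rc; rewrite hs (monicP (char_poly_monic _)) scale1r root_prod_XsubC => hin.
by rewrite -(normcN1 R); apply: le_bigmax_in.
Qed.

Lemma colt (R : pzRingType) n (v : 'cV[R]_n) :
  \col_k v (mxtens_unindex k).2 0 = (const_mx 1 : 'cV[R]_n) *t v.
Proof. by apply/matrixP => k j; rewrite !mxE mul1r (ord1 (mxtens_unindex (j : 'I_(1 * 1))).2). Qed.

Lemma reg_of_spec (R : rcfType) n (M : 'M[R]_n) :
  (forall d : 'rV[R]_(n * n), (forall k, -1 <= d 0 k <= 1) ->
     spectral_radius (kron (1%:M : 'M[R]_n) M *m diag_mx d) < 1) -> reg M.
Proof.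
move=> H d hd z hz; apply/eqP/negPn/negP => zn0.
pose D : 'rV[R]_(n * n) := \row_k d (mxtens_unindex k).2 0.
pose w : 'cV[R]_(n * n) := \col_k z (mxtens_unindex k).2 0.
have hD : forall k, -1 <= D 0 k <= 1 by move=> k; rewrite mxE; apply: hd.
have := H D hD; rewrite ltNge => /negP; apply.
apply: (@spec_ge1 R _ _ w).
  have [i hi] : exists i, z i 0 != 0.
    case: (pickP (fun i => z i 0 != 0)) => [i hi|h0]; first by exists i.
    by case/eqP: zn0; apply/colP => i; rewrite mxE; apply/eqP; move/negbT: (h0 i); rewrite negbK.
  apply/negP => /eqP w0; have := congr1 (fun v : 'cV[R]_(n * n) => v (mxtens_index (i, i)) 0) w0.
  by rewrite !mxE mxtens_indexK /= => /eqP; rewrite (negbTE hi).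
have hM : M *m dmul d z = - z by apply/eqP; rewrite -addr_eq0 addrC hz.
have e1 : diag_mx D *m w = (const_mx 1 : 'cV[R]_n) *t dmul d z.
  rewrite -colt; apply/colP => k; rewrite mul_diag_mx !mxE.
  done.
have T := tensmx_mul (1%:M : 'M[R]_n) M (const_mx 1 : 'cV[R]_n) (dmul d z).
rewrite -mulmxA e1 T mul1mx hM /w colt.
by apply/matrixP => k j; rewrite !mxE mulrN.
Qed.

Unset Implicit Arguments.

Theorem theorem4p5 (R : rcfType) (n : nat) (A B C F : 'M[R]_n) :
  A \in unitmx -> C \in unitmx ->
  (forall d : 'rV[R]_(n * n),
      (forall k, -1 <= d 0 k <= 1) ->
      spectral_radius
        (kron (1%:M : 'M[R]_n) (C *m invmx A *m B) *m diag_mx d) < 1) ->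
  exists! X : 'M[R]_n, A *m X + B *m mxabs (C *m X) = F.
Proof.
move=> uA uC H.
have rM : reg (C *m invmx A *m B) := reg_of_spec H.
set M := C *m invmx A *m B in rM *.
set G := C *m invmx A *m F.
have equiv : forall X, (A *m X + B *m mxabs (C *m X) = F) <->
                       (C *m X + M *m mxabs (C *m X) = G).
  move=> X; split => h.
    by rewrite /G -h /M mulmxDr !mulmxA mulmxKV.
  have := congr1 (mulmx (A *m invmx C)) h.
  by rewrite /M /G mulmxDr !mulmxA !mulmxKV // mulmxV // !mul1mx.
have colE : forall (Y : 'M[R]_n) j,
    col j (Y + M *m mxabs Y) = col j Y + M *m mxabs (col j Y).
  by move=> Y j; apply/colP => i; rewrite !mxE; congr (_ + _);
     apply: eq_bigr => k _; rewrite !mxE.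
have [y hy] : exists y : 'I_n -> 'cV[R]_n, forall j, y j + M *m mxabs (y j) = col j G.
  exact: (@fin_all_exists _ (fun _ => 'cV[R]_n) (fun j x => x + M *m mxabs x = col j G) (fun j => ave_surj rM (col j G))).
pose Y : 'M[R]_n := \matrix_(i, j) y j i 0.
have colY : forall j, col j Y = y j by move=> j; apply/colP => i; rewrite !mxE.
exists (invmx C *m Y); split.
  apply/equiv; rewrite mulKVmx //.
  apply/matrixP => i j; have := colE Y j; rewrite colY hy => /colP /(_ i).
  by rewrite !mxE.
move=> X' /equiv h'.
have CX : C *m X' = Y.
  apply/matrixP => i j.
  have : col j (C *m X') = y j.
    by apply: (ave_uniq rM); rewrite -colE h' hy.
  by move/colP => /(_ i); rewrite !mxE.
by rewrite -CX mulKmx.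
Qed.
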